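(* Let $\mathscr M,\mathscr N$ be convex, weakly compact subsets of $ba(\mathcal A)$. Then (i) $\mathscr M\cap\mathscr N=\varnothing$ if and only if there exists $f\in\mathcal S(\mathcal A)$ with $\inf_{\nu\in\mathscr N}\nu(f)>\sup_{\mu\in\mathscr M}\mu(f)$; and (ii) there exist $\mathcal K\subset\mathcal S(\mathcal A)$ and a set $\mathscr M_0$ of extreme points of $\mathscr M$ such that $\mathscr M=\{m\in ba(\mathcal A):m(k)\le\max_{\mu\in\mathscr M_0}\mu(k)\text{ for all }k\in\mathcal K\}$.
   Context: $\mathcal A$ algebra of subsets of $\Omega$; $ba(\mathcal A)$ the Banach space of bounded finitely additive real set functions with total variation norm; ''weakly'' refers to the weak topology of this Banach space. $\mathcal S(\mathcal A)$ the $\mathcal A$-simple functions and $\mu(f)=\int f\,d\mu$. *)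

(* Defs.v *)
From Stdlib Require Import Reals Lra List ClassicalEpsilon.
Open Scope R_scope.

Definition setfun (Omega : Type) := (Omega -> Prop) -> R.

Definition is_algebra {Omega : Type} (A : (Omega -> Prop) -> Prop) : Prop :=
  A (fun _ => True) /\
  (forall E, A E -> A (fun w => ~ E w)) /\
  (forall E F, A E -> A F -> A (fun w => E w \/ F w)).

Definition is_partition {Omega : Type} (A : (Omega -> Prop) -> Prop)
  (Es : list (Omega -> Prop)) : Prop :=
  Forall A Es /\
  (forall i j, (i < length Es)%nat -> (j < length Es)%nat -> i <> j ->
     forall w, ~ (nth i Es (fun _ => False) w /\ nth j Es (fun _ => False) w)) /\
  (forall w, exists E, In E Es /\ E w).

Definition var_sum {Omega : Type} (mu : setfun Omega) (Es : list (Omega -> Prop)) : R :=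
  fold_right (fun E acc => Rabs (mu E) + acc) 0 Es.

Definition var_sums {Omega : Type} (A : (Omega -> Prop) -> Prop) (mu : setfun Omega) : R -> Prop :=
  fun s => exists Es, is_partition A Es /\ s = var_sum mu Es.

Definition tv_norm_is {Omega : Type} (A : (Omega -> Prop) -> Prop) (mu : setfun Omega) (r : R) : Prop :=
  is_lub (var_sums A mu) r.

(* Elements of ba(A): bounded finitely additive real set functions on A,
   normalised to be 0 off A (so they are determined by their values on A). *)
Definition is_ba {Omega : Type} (A : (Omega -> Prop) -> Prop) (mu : setfun Omega) : Prop :=
  (forall E, ~ A E -> mu E = 0) /\
  (forall E F, A E -> A F -> (forall w, ~ (E w /\ F w)) ->
      mu (fun w => E w \/ F w) = mu E + mu F) /\
  (exists c, forall s, var_sums A mu s -> s <= c).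

Definition ba_lincomb {Omega : Type} (a : R) (mu : setfun Omega) (b : R) (nu : setfun Omega)
  : setfun Omega := fun E => a * mu E + b * nu E.

Definition is_dual {Omega : Type} (A : (Omega -> Prop) -> Prop) (phi : setfun Omega -> R) : Prop :=
  (forall a b mu nu, is_ba A mu -> is_ba A nu ->
      phi (ba_lincomb a mu b nu) = a * phi mu + b * phi nu) /\
  (exists C, forall mu r, is_ba A mu -> tv_norm_is A mu r -> Rabs (phi mu) <= C * r).

Definition weak_open {Omega : Type} (A : (Omega -> Prop) -> Prop) (U : setfun Omega -> Prop) : Prop :=
  forall mu, U mu -> is_ba A mu /\
    exists (phis : list (setfun Omega -> R)) (eps : R),
      Forall (is_dual A) phis /\ 0 < eps /\
      forall nu, is_ba A nu ->
        (forall phi, In phi phis -> Rabs (phi nu - phi mu) < eps) -> U nu.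

Definition weakly_compact {Omega : Type} (A : (Omega -> Prop) -> Prop) (K : setfun Omega -> Prop) : Prop :=
  (forall mu, K mu -> is_ba A mu) /\
  forall (I : Type) (U : I -> setfun Omega -> Prop),
    (forall i, weak_open A (U i)) ->
    (forall mu, K mu -> exists i, U i mu) ->
    exists l : list I, forall mu, K mu -> exists i, In i l /\ U i mu.

Definition convex {Omega : Type} (K : setfun Omega -> Prop) : Prop :=
  forall mu nu t, K mu -> K nu -> 0 <= t <= 1 -> K (ba_lincomb t mu (1 - t) nu).

Definition extreme_point {Omega : Type} (K : setfun Omega -> Prop) (mu : setfun Omega) : Prop :=
  K mu /\
  forall mu1 mu2 t, K mu1 -> K mu2 -> 0 < t < 1 ->
    mu = ba_lincomb t mu1 (1 - t) mu2 -> mu1 = mu2.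

(* A-simple functions, given by a representation f = sum_i a_i 1_{E_i}, E_i in A. *)
Definition simple_rep (Omega : Type) := list (R * (Omega -> Prop)).

Definition is_simple {Omega : Type} (A : (Omega -> Prop) -> Prop) (f : simple_rep Omega) : Prop :=
  Forall (fun p => A (snd p)) f.

Definition simple_eval {Omega : Type} (f : simple_rep Omega) (w : Omega) : R :=
  fold_right (fun p acc =>
    (if excluded_middle_informative (snd p w) then fst p else 0) + acc) 0 f.

Definition integral {Omega : Type} (mu : setfun Omega) (f : simple_rep Omega) : R :=
  fold_right (fun p acc => fst p * mu (snd p) + acc) 0 f.

(* Main.v *)
Require Import Defs.
From Stdlib Require Import Reals Lra Lia List ClassicalEpsilon Classical FunctionalExtensionality PropExtensionality.
Open Scope R_scope.

Lemma integral_lincomb {Omega} a (mu : setfun Omega) b nu (f : simple_rep Omega) :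
  integral (ba_lincomb a mu b nu) f = a * integral mu f + b * integral nu f.
Proof. induction f as [|[c E] f IH]; simpl; [ring|]. rewrite IH. unfold ba_lincomb. ring. Qed.

Lemma ba_abs_le {Omega} A (HA: is_algebra A) (mu: setfun Omega) r E :
  tv_norm_is A mu r -> A E -> Rabs (mu E) <= r.
Proof.
  intros [Hub _] HE. set (Es := E :: (fun w => ~ E w) :: nil).
  assert (H : var_sums A mu (var_sum mu Es)).
  { exists Es; split; auto. split. constructor; auto. constructor; [apply HA; auto| constructor].
    split. intros i j Hi Hj Hij w [H1 H2]. simpl in Hi, Hj.
    destruct i as [|[|i]]; destruct j as [|[|j]]; simpl in *; try lia; tauto.
    intros w. destruct (classic (E w)). exists E; simpl; auto. exists (fun w => ~ E w); simpl; auto. }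
  apply Hub in H. simpl in H. pose proof (Rabs_pos (mu (fun w => ~ E w))). lra.
Qed.

Lemma integral_dual {Omega} A (HA: is_algebra A) (f: simple_rep Omega) :
  is_simple A f -> is_dual A (fun mu => integral mu f).
Proof.
  intros Hf. split. intros; apply integral_lincomb.
  exists (fold_right (fun p acc => Rabs (fst p) + acc) 0 f). intros mu r Hmu Hr.
  revert Hf. induction f as [|[c E] f IH]; intros Hf; simpl.
  - rewrite Rabs_R0, Rmult_0_l; lra.
  - inversion Hf; subst. specialize (IH H2). simpl in H1.
    pose proof (ba_abs_le A HA mu r E Hr H1).
    eapply Rle_trans. apply Rabs_triang. rewrite Rabs_mult.
    pose proof (Rabs_pos c). nra.
Qed.

Lemma eval_dual {Omega} A (HA: is_algebra A) (E : Omega -> Prop) :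
  A E -> is_dual A (fun mu => mu E).
Proof.
  intros HE. split. intros; reflexivity.
  exists 1. intros mu r Hmu Hr. rewrite Rmult_1_l. apply (ba_abs_le A HA mu r E Hr HE).
Qed.

Lemma wo_preimage {Omega} A (phi : setfun Omega -> R) (Q : R -> Prop) :
  is_dual A phi -> (forall y, Q y -> exists e, 0 < e /\ forall z, Rabs (z - y) < e -> Q z) ->
  weak_open A (fun x => is_ba A x /\ Q (phi x)).
Proof.
  intros Hphi HQ mu [Hmu Hq]. split; auto. destruct (HQ _ Hq) as [e [He Hz]].
  exists (phi :: nil), e. split. constructor; auto. split; auto.
  intros nu Hnu Hin. split; auto. apply Hz. apply Hin. simpl; auto.
Qed.

Lemma wo_union {Omega} A (I:Type) (U: I -> setfun Omega -> Prop) :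
  (forall i, weak_open A (U i)) -> weak_open A (fun x => exists i, U i x).
Proof.
  intros H mu [i Hi]. destruct (H i mu Hi) as [Hb [phis [eps [H1 [H2 H3]]]]].
  split; auto. exists phis, eps. repeat split; auto. intros nu Hnu Hin. exists i. apply H3; auto.
Qed.

Lemma wo_or {Omega} A (U V : setfun Omega -> Prop) :
  weak_open A U -> weak_open A V -> weak_open A (fun x => U x \/ V x).
Proof.
  intros HU HV mu [Hm|Hm].
  - destruct (HU mu Hm) as [Hb [phis [eps [H1 [H2 H3]]]]]. split; auto.
    exists phis, eps. repeat split; auto.
  - destruct (HV mu Hm) as [Hb [phis [eps [H1 [H2 H3]]]]]. split; auto.
    exists phis, eps. repeat split; auto.
Qed.

Lemma wo_inter_list {Omega} A (I:Type) (U: I -> setfun Omega -> Prop) (l: list I) :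
  (forall i, In i l -> weak_open A (U i)) ->
  weak_open A (fun x => is_ba A x /\ forall i, In i l -> U i x).
Proof.
  induction l as [|i l IH]; intros H mu [Hmu Hall].
  - split; auto. exists nil, 1. split. constructor. split. lra.
    intros nu Hnu _. split; auto. intros i [].
  - split; auto. assert (Hi: U i mu) by (apply Hall; simpl; auto).
    destruct (H i (or_introl eq_refl) mu Hi) as [_ [phis1 [e1 [F1 [E1 H1]]]]].
    assert (Ht: weak_open A (fun x => is_ba A x /\ forall j, In j l -> U j x))
      by (apply IH; intros; apply H; simpl; auto).
    destruct (Ht mu) as [_ [phis2 [e2 [F2 [E2 H2]]]]].
    { split; auto. intros; apply Hall; simpl; auto. }
    exists (phis1 ++ phis2), (Rmin e1 e2). split. apply Forall_app; auto.
    split. apply Rmin_glb_lt; auto.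
    intros nu Hnu Hin. split; auto. intros j [<-|Hj].
    + apply H1; auto. intros phi Hp. eapply Rlt_le_trans. apply Hin. apply in_or_app; auto. apply Rmin_l.
    + apply H2; auto. intros phi Hp. eapply Rlt_le_trans. apply Hin. apply in_or_app; auto. apply Rmin_r.
Qed.

Lemma tube {Omega} A (M N : setfun Omega -> Prop) (HM : weakly_compact A M) (HN : weakly_compact A N)
  (I : Type) (P : I -> setfun Omega -> setfun Omega -> Prop) :
  (forall mu nu, M mu -> N nu -> exists i U V, weak_open A U /\ weak_open A V /\ U mu /\ V nu /\
       forall mu' nu', U mu' -> V nu' -> P i mu' nu') ->
  exists l, forall mu nu, M mu -> N nu -> exists i, In i l /\ P i mu nu.
Proof.
  intros H.
  set (T := (I * (setfun Omega -> Prop) * (setfun Omega -> Prop))%type).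
  set (G := fun mu (t:T) => weak_open A (snd (fst t)) /\ weak_open A (snd t) /\ snd (fst t) mu /\
              forall mu' nu', snd (fst t) mu' -> snd t nu' -> P (fst (fst t)) mu' nu').
  set (Q := fun mu (l : list T) => (forall t, In t l -> G mu t) /\
              forall nu, N nu -> exists t, In t l /\ snd t nu).
  assert (step1 : forall mu, M mu -> exists l, Q mu l).
  { intros mu Hmu. destruct HN as [_ HNc].
    destruct (HNc {t : T | G mu t} (fun j => snd (proj1_sig j))) as [l Hl].
    - intros [t Ht]; simpl. apply Ht.
    - intros nu Hnu. destruct (H mu nu Hmu Hnu) as [i [U [V [HU [HV [HUm [HVn HP]]]]]]].
      exists (exist (G mu) ((i,U),V) (conj HU (conj HV (conj HUm HP)))). simpl; auto.
    - exists (map (@proj1_sig _ _) l). split.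
      + intros t Ht. apply in_map_iff in Ht. destruct Ht as [[t' Ht'] [<- _]]. simpl; auto.
      + intros nu Hnu. destruct (Hl nu Hnu) as [[t Ht] [Hin Hv]]. exists t. split; auto.
        apply in_map_iff. exists (exist _ t Ht); auto. }
  set (W := fun (p : setfun Omega * list T) x => is_ba A x /\ forall t, In t (snd p) -> snd (fst t) x).
  destruct HM as [HMb HMc].
  destruct (HMc {p : setfun Omega * list T | M (fst p) /\ Q (fst p) (snd p)} (fun j => W (proj1_sig j)))
    as [l' Hl'].
  - intros [[mu l] [Hmu [HQ1 HQ2]]]; simpl. unfold W; simpl.
    apply (wo_inter_list A T (fun t => snd (fst t)) l). intros t Ht. apply (HQ1 t Ht).
  - intros mu Hmu. destruct (step1 mu Hmu) as [l Hq].
    exists (exist (fun p : setfun Omega * list T => M (fst p) /\ Q (fst p) (snd p)) (mu,l) (conj Hmu Hq)).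
    simpl. unfold W; simpl. split; auto. intros t Ht. apply (proj1 Hq t Ht).
  - exists (flat_map (fun j => map (fun t : T => fst (fst t)) (snd (proj1_sig j))) l').
    intros mu nu Hmu Hnu. destruct (Hl' mu Hmu) as [j [Hin [_ Hall]]].
    destruct (proj2_sig j) as [_ [HQ1 HQ2]].
    destruct (HQ2 nu Hnu) as [t [Ht Hv]]. exists (fst (fst t)). split.
    + apply in_flat_map. exists j. split; auto. apply (in_map (fun t0 : T => fst (fst t0))); auto.
    + destruct (HQ1 t Ht) as [_ [_ [_ HP]]]. apply HP; auto.
Qed.

Definition sq {Omega} (L : list (Omega -> Prop)) (p : (Omega -> Prop) -> R) : R :=
  fold_right (fun E acc => p E * p E + acc) 0 L.
Definition dot {Omega} (L : list (Omega -> Prop)) (p q : (Omega -> Prop) -> R) : R :=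
  fold_right (fun E acc => p E * q E + acc) 0 L.

Lemma sq_ext {Omega} (L : list (Omega -> Prop)) p q :
  (forall E, In E L -> p E = q E) -> sq L p = sq L q.
Proof.
  induction L as [|E L IH]; intros H; simpl; auto.
  rewrite (H E (or_introl eq_refl)), IH; auto. intros; apply H; simpl; auto.
Qed.

Lemma dot_ext {Omega} (L : list (Omega -> Prop)) p q q' :
  (forall E, In E L -> q E = q' E) -> dot L p q = dot L p q'.
Proof.
  induction L as [|E L IH]; intros H; simpl; auto.
  rewrite (H E (or_introl eq_refl)), IH; auto. intros; apply H; simpl; auto.
Qed.

Lemma sq_nonneg {Omega} (L : list (Omega -> Prop)) p : 0 <= sq L p.
Proof. induction L as [|E L IH]; simpl. lra. pose proof (Rle_0_sqr (p E)). unfold Rsqr in *. lra. Qed.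

Lemma sq_pos {Omega} (L : list (Omega -> Prop)) p :
  (exists E, In E L /\ p E <> 0) -> 0 < sq L p.
Proof.
  induction L as [|E L IH]; intros [F [HF Hp]]; simpl. destruct HF.
  pose proof (sq_nonneg L p). destruct HF as [<-|HF].
  - pose proof (Rsqr_pos_lt _ Hp). unfold Rsqr in *. lra.
  - pose proof (Rle_0_sqr (p E)). unfold Rsqr in *. assert (0 < sq L p) by (apply IH; eauto). lra.
Qed.

Lemma sq_expand {Omega} (L : list (Omega -> Prop)) p q t :
  sq L (fun E => p E + t * (q E - p E)) =
  sq L p + 2 * t * dot L p (fun E => q E - p E) + t * t * sq L (fun E => q E - p E).
Proof. induction L as [|E L IH]; simpl. ring. rewrite IH. ring. Qed.

Lemma dot_sub {Omega} (L : list (Omega -> Prop)) p a b :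
  dot L p a - dot L p b = dot L p (fun E => a E - b E).
Proof. induction L as [|E L IH]; simpl. ring. rewrite <- IH. ring. Qed.

Lemma dot_self {Omega} (L : list (Omega -> Prop)) p : dot L p p = sq L p.
Proof. induction L as [|E L IH]; simpl. ring. rewrite IH. ring. Qed.

Lemma integral_map {Omega} (L : list (Omega -> Prop)) p (mu : setfun Omega) :
  integral mu (map (fun E => (p E, E)) L) = dot L p (fun E => mu E).
Proof. induction L as [|E L IH]; simpl. ring. rewrite IH. ring. Qed.

Lemma var_ineq a b : 0 <= b -> (forall t, 0 < t <= 1 -> 0 <= 2*t*a + t*t*b) -> 0 <= a.
Proof.
  intros Hb H. destruct (Rle_lt_dec 0 a); auto.
  set (t := Rmin 1 (-a/(b+1))).
  assert (H0 : 0 < -a/(b+1)) by (apply Rdiv_lt_0_compat; lra).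
  assert (H1 : 0<t) by (apply Rmin_glb_lt; lra).
  assert (H2 : t <= 1) by apply Rmin_l.
  assert (H3 : t <= -a/(b+1)) by apply Rmin_r.
  assert (H4 : t*(b+1) <= -a).
  { apply Rmult_le_compat_r with (r:= b+1) in H3; [|lra].
    replace (-a/(b+1)*(b+1)) with (-a) in H3 by (field; lra). lra. }
  specialize (H t (conj H1 H2)). nra.
Qed.

Lemma open_ball c r y : Rabs (y - c) < r ->
  exists e, 0 < e /\ forall z, Rabs (z - y) < e -> Rabs (z - c) < r.
Proof.
  intros H. exists (r - Rabs (y - c)). split. lra. intros z Hz.
  replace (z - c) with ((z - y) + (y - c)) by ring.
  eapply Rle_lt_trans. apply Rabs_triang. lra.
Qed.

Lemma sq_cont {Omega} (L : list (Omega -> Prop)) p e : 0 < e ->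
  exists d, 0 < d /\ forall q, (forall E, In E L -> Rabs (q E - p E) < d) ->
    Rabs (sq L q - sq L p) < e.
Proof.
  revert e. induction L as [|E L IH]; intros e He.
  - exists 1. split. lra. intros q _. simpl. replace (0-0) with 0 by ring. rewrite Rabs_R0. auto.
  - destruct (IH (e/2)) as [d1 [Hd1 H1]]. lra.
    set (a := Rabs (p E)). set (k := 2*a+1).
    assert (Hk : 0 < k).
    { assert (0 <= a) by (unfold a; apply Rabs_pos). unfold k; lra. }
    set (d2 := Rmin 1 (e/(2*k))).
    assert (Hd2 : 0 < d2) by (apply Rmin_glb_lt; [lra| apply Rdiv_lt_0_compat; lra]).
    assert (Hd21 : d2 <= 1) by apply Rmin_l.
    assert (Hd2e : d2 * (2*k) <= e).
    { assert (h : d2 <= e/(2*k)) by apply Rmin_r.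
      apply Rmult_le_compat_r with (r := 2*k) in h; [|lra].
      replace (e/(2*k)*(2*k)) with e in h by (field; lra). lra. }
    exists (Rmin d1 d2). split. apply Rmin_glb_lt; auto.
    intros q Hq. simpl.
    assert (Ht : Rabs (sq L q - sq L p) < e/2).
    { apply H1. intros F HF. eapply Rlt_le_trans. apply Hq; simpl; auto. apply Rmin_l. }
    assert (Hx : Rabs (q E - p E) < d2).
    { eapply Rlt_le_trans. apply Hq; simpl; auto. apply Rmin_r. }
    set (x := q E - p E) in *.
    assert (Hh : Rabs (q E * q E - p E * p E) < e/2).
    { replace (q E * q E - p E * p E) with (x * (x + 2 * p E)) by (unfold x; ring).
      rewrite Rabs_mult.
      assert (Htr : Rabs (x + 2 * p E) <= Rabs x + 2 * a).
      { eapply Rle_trans. apply Rabs_triang. rewrite Rabs_mult, (Rabs_pos_eq 2) by lra. unfold a; lra. }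
      pose proof (Rabs_pos x). pose proof (Rabs_pos (x + 2 * p E)).
      unfold k in *. nra. }
    replace (q E * q E + sq L q - (p E * p E + sq L p))
      with ((q E * q E - p E * p E) + (sq L q - sq L p)) by ring.
    eapply Rle_lt_trans. apply Rabs_triang. lra.
Qed.

Lemma list_min {X} (Q : X -> Prop) (h : X -> R) l :
  (exists i, In i l /\ Q i) -> exists i, In i l /\ Q i /\ forall j, In j l -> Q j -> h i <= h j.
Proof.
  induction l as [|x l IH]; intros [i [Hi Hq]]; [destruct Hi|].
  destruct (classic (exists i, In i l /\ Q i)) as [Hex|Hno].
  - destruct (IH Hex) as [m [Hm [Hqm Hmin]]]. destruct (classic (Q x)) as [Hx|Hx].
    + destruct (Rle_lt_dec (h x) (h m)).
      * exists x. split; [left; auto|]. split; auto. intros j [<-|Hj] Hqj; [lra|].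
        specialize (Hmin j Hj Hqj); lra.
      * exists m. split; [right;auto|]. split; auto. intros j [<-|Hj] Hqj; [lra| auto].
    + exists m. split; [right; auto|]. split; auto. intros j [<-|Hj] Hqj; [contradiction|auto].
  - exists x. destruct Hi as [<-|Hi]; [|exfalso; apply Hno; eauto]. split; [left; auto|].
    split; auto. intros j [<-|Hj] Hqj; [lra|exfalso; apply Hno; eauto].
Qed.

Lemma ball_open {Omega} A (HA : is_algebra A) (E : Omega -> Prop) c r : A E ->
  weak_open A (fun x => is_ba A x /\ Rabs (x E - c) < r).
Proof.
  intros HE. apply (wo_preimage A (fun x => x E) (fun y => Rabs (y - c) < r)).
  apply eval_dual; auto. intros y Hy. apply open_ball; auto.
Qed.

Lemma separation {Omega} A (HA: is_algebra A) (M N : setfun Omega -> Prop)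
  (HMc: convex M) (HMk: weakly_compact A M) (HNc: convex N) (HNk: weakly_compact A N) :
  (forall mu, ~ (M mu /\ N mu)) ->
  exists f, is_simple A f /\ exists c1 c2, c2 < c1 /\
     (forall nu, N nu -> c1 <= integral nu f) /\ (forall mu, M mu -> integral mu f <= c2).
Proof.
  intros Hdis.
  destruct (classic (exists mu, M mu)) as [[m0 Hm0]|HM0].
  2: { exists nil. split. constructor. exists 0, (-1). split. lra.
       split; intros; simpl; [lra|]. exfalso; eauto. }
  destruct (classic (exists nu, N nu)) as [[n0 Hn0]|HN0].
  2: { exists nil. split. constructor. exists 1, 0. split. lra.
       split; intros; simpl; [exfalso; eauto|lra]. }
  assert (HL: exists L : list {E | A E}, forall mu nu, M mu -> N nu ->
             exists E, In E L /\ mu (proj1_sig E) <> nu (proj1_sig E)).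
  { apply (tube A M N HMk HNk {E | A E} (fun E mu nu => mu (proj1_sig E) <> nu (proj1_sig E))).
    intros mu nu Hmu Hnu.
    assert (Hne: exists E, A E /\ mu E <> nu E).
    { apply NNPP; intro Hc. apply (Hdis mu). split; auto. replace mu with nu; auto.
      apply functional_extensionality. intros E. destruct (classic (A E)) as [HE|HE].
      - apply NNPP; intro Hx. apply Hc. exists E; split; auto.
      - rewrite (proj1 (proj1 HNk nu Hnu) E HE), (proj1 (proj1 HMk mu Hmu) E HE); auto. }
    destruct Hne as [E [HE Hne]].
    assert (Hd : 0 < Rabs (mu E - nu E)) by (apply Rabs_pos_lt; lra).
    exists (exist _ E HE), (fun x => is_ba A x /\ Rabs (x E - mu E) < Rabs (mu E - nu E) /2),
      (fun x => is_ba A x /\ Rabs (x E - nu E) < Rabs (mu E - nu E)/2).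
    split. apply ball_open; auto. split. apply ball_open; auto.
    split. split. apply (proj1 HMk); auto. rewrite Rminus_diag, Rabs_R0; lra.
    split. split. apply (proj1 HNk); auto. rewrite Rminus_diag, Rabs_R0; lra.
    intros mu' nu' [_ H1] [_ H2]. simpl. intro Heq. rewrite Heq in H1.
    unfold Rabs in *; repeat match goal with H: context [Rcase_abs ?x] |- _ => destruct (Rcase_abs x) end; lra. }
  destruct HL as [L0 HL]. set (L := map (@proj1_sig _ _) L0).
  assert (HLA : forall E, In E L -> A E).
  { intros E HE. unfold L in HE. apply in_map_iff in HE. destruct HE as [[F HF] [<- _]]; auto. }
  assert (HL' : forall mu nu, M mu -> N nu -> exists E, In E L /\ mu E <> nu E).
  { intros mu nu Hmu Hnu. destruct (HL mu nu Hmu Hnu) as [E [HE Hne]]. exists (proj1_sig E).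
    split; auto. unfold L. apply in_map; auto. }
  set (g := fun mu nu : setfun Omega => sq L (fun E => nu E - mu E)).
  assert (Hmin: exists mu0 nu0, M mu0 /\ N nu0 /\ forall a b, M a -> N b -> g mu0 nu0 <= g a b).
  { apply NNPP; intro Hno.
    assert (Hcov: forall mu nu, M mu -> N nu -> exists a b, M a /\ N b /\ g a b < g mu nu).
    { intros mu nu Hmu Hnu. apply NNPP; intro Hc. apply Hno. exists mu, nu. split; auto. split; auto.
      intros a b Ha Hb. apply Rnot_lt_le. intro Hlt. apply Hc. exists a, b; auto. }
    destruct (tube A M N HMk HNk (setfun Omega * setfun Omega)
      (fun p mu nu => M (fst p) /\ N (snd p) /\ g (fst p) (snd p) < g mu nu)) as [l Hl].
    { intros mu nu Hmu Hnu. destruct (Hcov mu nu Hmu Hnu) as [a [b [Ha [Hb Hab]]]].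
      destruct (sq_cont L (fun E => nu E - mu E) (g mu nu - g a b)) as [d [Hd Hcont]]. lra.
      exists (a,b), (fun x => is_ba A x /\ forall E, In E L ->
                        (fun E x => is_ba A x /\ Rabs (x E - mu E) < d/2) E x),
        (fun x => is_ba A x /\ forall E, In E L ->
                        (fun E x => is_ba A x /\ Rabs (x E - nu E) < d/2) E x).
      split. apply wo_inter_list. intros E HE. apply ball_open; auto.
      split. apply wo_inter_list. intros E HE. apply ball_open; auto.
      split. split. apply (proj1 HMk); auto. intros E _. split. apply (proj1 HMk); auto.
        rewrite Rminus_diag, Rabs_R0; lra.
      split. split. apply (proj1 HNk); auto. intros E _. split. apply (proj1 HNk); auto.
        rewrite Rminus_diag, Rabs_R0; lra.
      intros mu' nu' [_ H1] [_ H2]. simpl. split; auto. split; auto.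
      assert (Hc : Rabs (g mu' nu' - g mu nu) < g mu nu - g a b).
      { apply Hcont. intros E HE. destruct (H1 E HE) as [_ h1], (H2 E HE) as [_ h2].
        unfold Rabs in *; repeat match goal with H: context [Rcase_abs ?x] |- _ => destruct (Rcase_abs x) end;
        repeat match goal with |- context [Rcase_abs ?x] => destruct (Rcase_abs x) end; lra. }
      apply Rabs_def2 in Hc. lra. }
    destruct (list_min (fun p : setfun Omega * setfun Omega => M (fst p) /\ N (snd p))
                (fun p => g (fst p) (snd p)) l) as [p [Hp [[Hpa Hpb] Hpmin]]].
    { destruct (Hl m0 n0 Hm0 Hn0) as [i [Hi [Ha [Hb _]]]]. exists i; auto. }
    destruct (Hl (fst p) (snd p) Hpa Hpb) as [j [Hj [Hja [Hjb Hjlt]]]].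
    specialize (Hpmin j Hj (conj Hja Hjb)). lra. }
  destruct Hmin as [mu0 [nu0 [Hmu0 [Hnu0 Hmin]]]].
  set (p := fun E => nu0 E - mu0 E).
  exists (map (fun E => (p E, E)) L). split.
  { apply Forall_forall. intros x Hx. apply in_map_iff in Hx. destruct Hx as [E [<- HE]].
    simpl. apply HLA; auto. }
  exists (integral nu0 (map (fun E => (p E, E)) L)), (integral mu0 (map (fun E => (p E, E)) L)).
  rewrite !integral_map. split; [|split].
  - assert (0 < sq L p).
    { apply sq_pos. destruct (HL' mu0 nu0 Hmu0 Hnu0) as [E [HE Hne]]. exists E. split; auto.
      unfold p; lra. }
    rewrite <- dot_self in H.
    assert (Hd : dot L p (fun E => nu0 E) - dot L p (fun E => mu0 E) = dot L p p)
      by (rewrite dot_sub; reflexivity). lra.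
  - intros nu Hnu. rewrite integral_map.
    set (q := fun E => nu E - mu0 E).
    assert (Hv : 0 <= dot L p (fun E => q E - p E)).
    { apply (var_ineq _ (sq L (fun E => q E - p E))). apply sq_nonneg.
      intros t Ht.
      assert (HN : N (ba_lincomb t nu (1 - t) nu0)) by (apply HNc; auto; lra).
      specialize (Hmin mu0 _ Hmu0 HN). unfold g in Hmin.
      rewrite (sq_ext L (fun E => ba_lincomb t nu (1 - t) nu0 E - mu0 E) (fun E => p E + t * (q E - p E))) in Hmin.
      2: { intros E _. unfold ba_lincomb, p, q. ring. }
      change (sq L (fun E => nu0 E - mu0 E)) with (sq L p) in Hmin.
      rewrite sq_expand in Hmin. lra. }
    rewrite (dot_ext L p (fun E => q E - p E) (fun E => nu E - nu0 E)) in Hv.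
    2: { intros E _. unfold q, p. ring. }
    rewrite <- dot_sub in Hv. unfold dot in *; cbv beta in *; lra.
  - intros mu Hmu. rewrite integral_map.
    set (q := fun E => nu0 E - mu E).
    assert (Hv : 0 <= dot L p (fun E => q E - p E)).
    { apply (var_ineq _ (sq L (fun E => q E - p E))). apply sq_nonneg.
      intros t Ht.
      assert (HM : M (ba_lincomb t mu (1 - t) mu0)) by (apply HMc; auto; lra).
      specialize (Hmin _ nu0 HM Hnu0). unfold g in Hmin.
      rewrite (sq_ext L (fun E => nu0 E - ba_lincomb t mu (1 - t) mu0 E) (fun E => p E + t * (q E - p E))) in Hmin.
      2: { intros E _. unfold ba_lincomb, p, q. ring. }
      change (sq L (fun E => nu0 E - mu0 E)) with (sq L p) in Hmin.
      rewrite sq_expand in Hmin. lra. }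
    rewrite (dot_ext L p (fun E => q E - p E) (fun E => mu0 E - mu E)) in Hv.
    2: { intros E _. unfold q, p. ring. }
    rewrite <- dot_sub in Hv. unfold dot in *; cbv beta in *; lra.
Qed.

Definition subs {X : Type} (S T : X -> Prop) := forall x, S x -> T x.
Definition itr {X : Type} (S0 : X -> Prop) (C : (X -> Prop) -> Prop) : X -> Prop :=
  fun x => S0 x /\ forall S, C S -> S x.
Definition chainP {X : Type} (C : (X -> Prop) -> Prop) :=
  forall S T, C S -> C T -> subs S T \/ subs T S.

Inductive tower {X : Type} (nx : (X -> Prop) -> (X -> Prop)) (S0 : X -> Prop) : (X -> Prop) -> Prop :=
| tw_next : forall S, tower nx S0 S -> tower nx S0 (nx S)
| tw_inter : forall C : (X -> Prop) -> Prop, (forall S, C S -> tower nx S0 S) -> chainP C ->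
    tower nx S0 (itr S0 C).

Lemma set_eq {X : Type} (S T : X -> Prop) : subs S T -> subs T S -> S = T.
Proof.
  intros H1 H2. apply functional_extensionality. intros x.
  apply propositional_extensionality. split; auto.
Qed.

Lemma tower_S0 {X} nx (S0 : X -> Prop) (Hnx : forall S, subs (nx S) S) :
  forall S, tower nx S0 S -> subs S S0.
Proof.
  intros S H. induction H as [S H IH|C HC IH Hch].
  - intros x Hx. apply IH, Hnx, Hx.
  - intros x [Hx _]; auto.
Qed.

Definition extremeT {X} nx (S0 : X -> Prop) (c : X -> Prop) :=
  forall x, tower nx S0 x -> subs c x -> ~ subs x c -> subs c (nx x).

Lemma towerL1 {X} nx (S0 : X -> Prop) (Hnx : forall S, subs (nx S) S) c :
  tower nx S0 c -> extremeT nx S0 c -> forall x, tower nx S0 x -> subs c x \/ subs x (nx c).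
Proof.
  intros Hc Hext x Hx. induction Hx as [x Hx IH|C HC IH Hch].
  - destruct IH as [H|H].
    + destruct (classic (subs x c)) as [H'|H'].
      * right. rewrite (set_eq x c H' H). intros z Hz; auto.
      * left. apply Hext; auto.
    + right. intros z Hz. apply H, Hnx, Hz.
  - destruct (classic (exists S, C S /\ subs S (nx c))) as [[S [HS Hsub]]|Hno].
    + right. intros z [_ Hz]. apply Hsub, Hz, HS.
    + left. intros z Hz. split. apply (tower_S0 nx S0 Hnx c Hc), Hz.
      intros S HS. destruct (IH S HS) as [H|H]. apply H, Hz. exfalso; eauto.
Qed.

Lemma towerL2 {X} nx (S0 : X -> Prop) (Hnx : forall S, subs (nx S) S) c :
  tower nx S0 c -> extremeT nx S0 c.
Proof.
  intros Hc. induction Hc as [c Hc IH|C HC IH Hch].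
  - intros x Hx Hsub Hnsub.
    destruct (towerL1 nx S0 Hnx c Hc IH x Hx) as [H|H]; [|contradiction].
    destruct (classic (subs x c)) as [H'|H'].
    + rewrite (set_eq x c H' H). intros z Hz; auto.
    + intros z Hz. apply (IH x Hx H H'). apply Hnx, Hz.
  - intros x Hx Hsub Hnsub.
    assert (Hz : exists z, x z /\ ~ itr S0 C z).
    { apply NNPP; intro Hn. apply Hnsub. intros z Hz. apply NNPP; intro. apply Hn; eauto. }
    destruct Hz as [z [Hxz Hnz]].
    assert (HS : exists S, C S /\ ~ S z).
    { apply NNPP; intro Hn. apply Hnz. split. apply (tower_S0 nx S0 Hnx x Hx), Hxz.
      intros S HS. apply NNPP; intro. apply Hn; eauto. }
    destruct HS as [S [HS HSz]].
    destruct (towerL1 nx S0 Hnx S (HC S HS) (IH S HS) x Hx) as [H|H].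
    + assert (Hn : ~ subs x S) by (intro Hs; apply HSz, Hs, Hxz).
      intros w Hw. apply (IH S HS x Hx H Hn). destruct Hw as [_ Hw]. apply Hw, HS.
    + exfalso. apply HSz. apply Hnx, H, Hxz.
Qed.

Lemma tower_chain {X} nx (S0 : X -> Prop) (Hnx : forall S, subs (nx S) S) :
  chainP (tower nx S0).
Proof.
  intros a b Ha Hb. destruct (towerL1 nx S0 Hnx a Ha (towerL2 nx S0 Hnx a Ha) b Hb) as [H|H].
  left; auto. right. intros z Hz. apply Hnx, H, Hz.
Qed.

Lemma tower_top {X} nx (S0 : X -> Prop) (Hnx : forall S, subs (nx S) S) :
  tower nx S0 (itr S0 (tower nx S0)) /\ subs (itr S0 (tower nx S0)) (nx (itr S0 (tower nx S0))).
Proof.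
  assert (H : tower nx S0 (itr S0 (tower nx S0))).
  { apply tw_inter; auto. apply tower_chain; auto. }
  split; auto. intros z [_ Hz]. apply Hz. apply tw_next; auto.
Qed.

Definition faceM {Omega} (M S : setfun Omega -> Prop) :=
  forall mu1 mu2 t, M mu1 -> M mu2 -> 0 < t < 1 -> S (ba_lincomb t mu1 (1-t) mu2) -> S mu1 /\ S mu2.
Definition rclosed {Omega} A (M S : setfun Omega -> Prop) :=
  exists W, weak_open A W /\ forall x, M x -> (W x <-> ~ S x).
Definition good {Omega} A (M S : setfun Omega -> Prop) :=
  subs S M /\ (exists x, S x) /\ rclosed A M S /\ faceM M S.

Lemma le_fold_max l b : In b l -> b <= fold_right Rmax 0 l.
Proof.
  induction l as [|a l IH]; intros H; [destruct H|]. simpl. destruct H as [<-|H].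
  apply Rmax_l. eapply Rle_trans. apply IH; auto. apply Rmax_r.
Qed.

Lemma posmin (l : list {e : R | 0 < e}) : exists d, 0 < d /\ forall e, In e l -> d <= proj1_sig e.
Proof.
  induction l as [|e l IH]. exists 1. split. lra. intros e [].
  destruct IH as [d [Hd H]]. exists (Rmin (proj1_sig e) d). split.
  apply Rmin_glb_lt; auto. apply (proj2_sig e).
  intros e' [<-|He]. apply Rmin_l. eapply Rle_trans. apply Rmin_r. auto.
Qed.

Lemma lt_open b y : y < b -> exists e, 0 < e /\ forall z, Rabs (z - y) < e -> z < b.
Proof. intros Hy. exists (b - y). split. lra. intros z Hz. apply Rabs_def2 in Hz. lra. Qed.

Lemma attain {Omega} A (HA : is_algebra A) (M : setfun Omega -> Prop) (HMk : weakly_compact A M) S phi :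
  is_dual A phi -> subs S M -> (exists x, S x) -> rclosed A M S ->
  exists z, S z /\ forall w, S w -> phi w <= phi z.
Proof.
  intros Hphi HSM [z0 Hz0] [W [HW HWeq]]. destruct HMk as [HMb HMc].
  destruct (HMc R (fun b x => is_ba A x /\ phi x < b)) as [lb Hlb].
  { intros b. apply (wo_preimage A phi (fun y => y < b)); auto. intros y Hy. apply lt_open; auto. }
  { intros mu Hmu. exists (phi mu + 1). split; auto. lra. }
  set (E := fun y => exists z, S z /\ y = phi z).
  destruct (completeness E) as [s [Hub Hlub]].
  { exists (fold_right Rmax 0 lb). intros y [z [Hz ->]].
    destruct (Hlb z (HSM z Hz)) as [b [Hb [_ Hlt]]]. pose proof (le_fold_max lb b Hb). lra. }
  { exists (phi z0). exists z0; auto. }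
  apply NNPP; intro Hno.
  assert (Hlt: forall z, S z -> phi z < s).
  { intros z Hz. assert (H : phi z <= s) by (apply Hub; exists z; auto).
    destruct (Rle_lt_or_eq_dec _ _ H) as [|Heq]; auto. exfalso. apply Hno. exists z. split; auto.
    intros w Hw. rewrite Heq. apply Hub. exists w; auto. }
  destruct (HMc {e : R | 0 < e} (fun e x => W x \/ (is_ba A x /\ phi x < s - proj1_sig e))) as [le Hle].
  { intros e. apply wo_or; auto. apply (wo_preimage A phi (fun y => y < s - proj1_sig e)); auto.
    intros y Hy. apply lt_open; auto. }
  { intros mu Hmu. destruct (classic (S mu)) as [HS|HS].
    - assert (h : 0 < (s - phi mu)/2) by (pose proof (Hlt mu HS); lra).
      exists (exist _ _ h). right. split. auto. simpl. lra.
    - exists (exist (fun e => 0 < e) 1 Rlt_0_1). left. apply HWeq; auto. }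
  destruct (posmin le) as [d [Hd Hdle]].
  assert (Hb : is_upper_bound E (s - d)).
  { intros y [z [Hz ->]]. destruct (Hle z (HSM z Hz)) as [e [He [HWz|[_ Hp]]]].
    - exfalso. apply (proj1 (HWeq z (HSM z Hz)) HWz Hz).
    - specialize (Hdle e He). lra. }
  specialize (Hlub _ Hb). lra.
Qed.

Lemma argmax_good {Omega} A (HA : is_algebra A) (M : setfun Omega -> Prop) (HMk : weakly_compact A M) S f :
  good A M S -> is_simple A f -> exists S', good A M S' /\ subs S' S /\
    forall x, S' x -> forall w, S w -> integral w f <= integral x f.
Proof.
  intros [HSM [Hne [Hcl Hface]]] Hf. set (phi := fun x => integral x f).
  destruct (attain A HA M HMk S phi (integral_dual A HA f Hf) HSM Hne Hcl) as [z0 [Hz0 Hmax]].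
  exists (fun x => S x /\ phi z0 <= phi x). split; [|split].
  - split; [|split; [|split]].
    + intros x [Hx _]; auto.
    + exists z0; split; auto; lra.
    + destruct Hcl as [W [HW HWeq]]. exists (fun x => W x \/ (is_ba A x /\ phi x < phi z0)). split.
      * apply wo_or; auto. apply (wo_preimage A phi (fun y => y < phi z0)).
        apply integral_dual; auto. intros y Hy. apply lt_open; auto.
      * intros x Hx. rewrite HWeq by auto. split.
        -- intros [H|[_ H]] [H1 H2]; auto. lra.
        -- intros H. destruct (classic (S x)) as [HS|HS]; [|left; auto]. right. split.
           apply (proj1 HMk); auto. apply Rnot_le_lt. intro. apply H; auto.
    + intros mu1 mu2 t H1 H2 Ht [HS Hle].
      destruct (Hface mu1 mu2 t H1 H2 Ht HS) as [HS1 HS2].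
      unfold phi in *. rewrite integral_lincomb in Hle.
      pose proof (Hmax mu1 HS1). pose proof (Hmax mu2 HS2). unfold phi in *.
      split; split; auto; nra.
  - intros x [Hx _]; auto.
  - intros x [Hx Hle] w Hw. pose proof (Hmax w Hw). unfold phi in *. lra.
Qed.

Lemma split_good {Omega} A (HA : is_algebra A) (M : setfun Omega -> Prop) (HMk : weakly_compact A M) S x y :
  good A M S -> S x -> S y -> x <> y -> exists S', good A M S' /\ subs S' S /\ ~ subs S S'.
Proof.
  intros HG Hx Hy Hxy. pose proof HG as [HSM _].
  assert (HE: exists E, A E /\ x E <> y E).
  { apply NNPP; intro Hc. apply Hxy.
    apply functional_extensionality. intros E. destruct (classic (A E)) as [HE|HE].
    - apply NNPP; intro Hx'. apply Hc. exists E; split; auto.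
    - rewrite (proj1 (proj1 HMk x (HSM x Hx)) E HE), (proj1 (proj1 HMk y (HSM y Hy)) E HE); auto. }
  destruct HE as [E [HE Hne]].
  destruct (Rlt_or_le (x E) (y E)) as [Hlt|Hle].
  - destruct (argmax_good A HA M HMk S ((1,E)::nil) HG) as [S' [HG' [Hsub Hmax]]].
    { constructor; [simpl; auto|constructor]. }
    exists S'. split; auto. split; auto. intro H. specialize (Hmax x (H x Hx) y Hy). simpl in Hmax. lra.
  - destruct (argmax_good A HA M HMk S ((-1,E)::nil) HG) as [S' [HG' [Hsub Hmax]]].
    { constructor; [simpl; auto|constructor]. }
    exists S'. split; auto. split; auto. intro H. specialize (Hmax x (H x Hx) y Hy). simpl in Hmax.
    assert (x E <> y E) by auto. lra.
Qed.

Lemma list_least {X} (Rl : X -> X -> Prop) (x : X) (l : list X) :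
  (forall a, Rl a a) -> (forall a b c, Rl a b -> Rl b c -> Rl a c) ->
  (forall a b, In a (x::l) -> In b (x::l) -> Rl a b \/ Rl b a) ->
  exists m, In m (x::l) /\ forall b, In b (x::l) -> Rl m b.
Proof.
  intros Hr Ht. induction l as [|y l IH]; intros Htot.
  - exists x. split. left; auto. intros b [<-|[]]. auto.
  - destruct IH as [m [Hm Hmin]].
    { intros a b Ha Hb. apply Htot; simpl in *; tauto. }
    destruct (Htot m y) as [H|H].
    + simpl in *; tauto.
    + simpl; auto.
    + exists m. split. simpl in *; tauto. intros b [<-|[<-|Hb]]; auto.
      apply Hmin; simpl; auto. apply Hmin; simpl; auto.
    + exists y. split. simpl; auto. intros b [<-|[<-|Hb]]; auto.
      apply Ht with m; auto. apply Hmin; simpl; auto. apply Ht with m; auto. apply Hmin; simpl; auto.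
Qed.

Lemma inter_good {Omega} A (M : setfun Omega -> Prop) (HMk : weakly_compact A M) S0 C :
  good A M S0 -> (forall S, C S -> good A M S /\ subs S S0) -> chainP C -> good A M (itr S0 C).
Proof.
  intros HG0 HC Hch. destruct HG0 as [H0M [Hne0 [[W0 [HW0 HW0eq]] Hf0]]].
  set (Pp := fun p : (setfun Omega -> Prop) * (setfun Omega -> Prop) =>
    C (fst p) /\ weak_open A (snd p) /\ forall x, M x -> (snd p x <-> ~ fst p x)).
  assert (Hget: forall S x, C S -> M x -> ~ S x -> exists p : {p | Pp p}, snd (proj1_sig p) x).
  { intros S x HS Hx Hn. destruct (proj1 (HC S HS)) as [_ [_ [[W [HW HWeq]] _]]].
    exists (exist Pp (S, W) (conj HS (conj HW HWeq))). simpl. apply HWeq; auto. }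
  assert (Hpw: forall p : {p | Pp p}, forall x, M x -> snd (proj1_sig p) x -> ~ fst (proj1_sig p) x).
  { intros [[S W] [HS [HW HWeq]]] x Hx Hw. simpl in *. apply HWeq; auto. }
  assert (Hout : forall x, S0 x -> ~ itr S0 C x -> exists S, C S /\ ~ S x).
  { intros x H0 Hn. apply NNPP; intro Hn'. apply Hn. split; auto. intros S HS.
    apply NNPP; intro; apply Hn'; eauto. }
  split; [|split; [|split]].
  - intros x [Hx _]; auto.
  - apply NNPP; intro Hemp.
    destruct HMk as [HMb HMc].
    destruct (HMc (option {p | Pp p})
      (fun i => match i with None => W0 | Some p => snd (proj1_sig p) end)) as [l Hl].
    + intros [p|]; simpl; [apply (proj2_sig p)|auto].
    + intros x Hx. destruct (classic (S0 x)) as [H0|H0].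
      * destruct (Hout x H0) as [S [HS Hn]]. intro; apply Hemp; eauto.
        destruct (Hget S x HS Hx Hn) as [p Hp]. exists (Some p); auto.
      * exists None. apply HW0eq; auto.
    + set (Si := fun i : option {p | Pp p} => match i with None => S0 | Some p => fst (proj1_sig p) end).
      destruct (list_least (fun i j => subs (Si i) (Si j)) None l) as [m [Hm Hmin]].
      * intros a z Hz; auto.
      * intros a b c H1 H2 z Hz. auto.
      * intros a b _ _. destruct a as [pa|], b as [pb|]; simpl.
        -- apply Hch; apply (proj2_sig pa) || apply (proj2_sig pb).
        -- left. apply (HC _ (proj1 (proj2_sig pa))).
        -- right. apply (HC _ (proj1 (proj2_sig pb))).
        -- left. intros z Hz; auto.
      * assert (Hnm : exists z, Si m z).
        { destruct m as [p|]; simpl; auto. apply (HC _ (proj1 (proj2_sig p))). }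
        destruct Hnm as [z Hz].
        assert (HzM : M z).
        { destruct m as [p|]; simpl in Hz; auto. apply H0M. apply (HC _ (proj1 (proj2_sig p))); auto. }
        destruct (Hl z HzM) as [i [Hi Hiz]].
        assert (Hzi : Si i z) by (apply (Hmin i); simpl; auto).
        destruct i as [p|]; simpl in *.
        -- apply (Hpw p z HzM Hiz Hzi).
        -- apply (proj1 (HW0eq z HzM) Hiz Hzi).
  - exists (fun x => W0 x \/ exists p : {p|Pp p}, snd (proj1_sig p) x). split.
    + apply wo_or; auto. apply (wo_union A {p | Pp p} (fun p => snd (proj1_sig p))).
      intros p; apply (proj2_sig p).
    + intros x Hx. split.
      * intros [H|[p Hp]] [H0 Hall]. apply (proj1 (HW0eq x Hx) H H0).
        apply (Hpw p x Hx Hp). apply Hall. apply (proj2_sig p).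
      * intros Hn. destruct (classic (S0 x)) as [H0|H0].
        -- right. destruct (Hout x H0 Hn) as [S [HS HnS]]. apply (Hget S x HS Hx HnS).
        -- left. apply HW0eq; auto.
  - intros mu1 mu2 t H1 H2 Ht [H0 Hall]. destruct (Hf0 mu1 mu2 t H1 H2 Ht H0).
    split; split; auto; intros S HS; destruct (proj1 (HC S HS)) as [_ [_ [_ Hf]]];
      apply (Hf mu1 mu2 t); auto; apply Hall; auto.
Qed.

Definition nextS {Omega} A (M : setfun Omega -> Prop) (S : setfun Omega -> Prop) : setfun Omega -> Prop :=
  match excluded_middle_informative (exists S', good A M S' /\ subs S' S /\ ~ subs S S') with
  | left h => proj1_sig (constructive_indefinite_description _ h)
  | right _ => S
  end.

Lemma nextS_spec {Omega} A (M S : setfun Omega -> Prop) :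
  subs (nextS A M S) S /\ (good A M S -> good A M (nextS A M S)) /\
  ((exists S', good A M S' /\ subs S' S /\ ~ subs S S') -> ~ subs S (nextS A M S)).
Proof.
  unfold nextS. destruct (excluded_middle_informative _) as [h|h].
  - destruct (constructive_indefinite_description _ h) as [S' HS']. simpl. tauto.
  - split; [intros x Hx; auto|split; [auto|intros H; contradiction]].
Qed.

Lemma extreme_exists {Omega} A (HA : is_algebra A) (M : setfun Omega -> Prop) (HMk : weakly_compact A M) S0 :
  good A M S0 -> exists x0, S0 x0 /\ extreme_point M x0.
Proof.
  intros HG0. set (nx := nextS A M).
  assert (Hnx : forall S, subs (nx S) S) by (intros; apply nextS_spec).
  assert (Htg : forall S, tower nx S0 S -> good A M S).
  { intros S H. induction H as [S H IH|C HC IH Hch].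
    - apply nextS_spec; auto.
    - apply inter_good; auto. intros S HS. split; auto. apply (tower_S0 nx S0 Hnx S (HC S HS)). }
  destruct (tower_top nx S0 Hnx) as [Htop Hsub]. set (T := itr S0 (tower nx S0)) in *.
  assert (HGT : good A M T) by auto.
  assert (Hmin : forall S', good A M S' -> subs S' T -> subs T S').
  { intros S' HG' Hs'. apply NNPP; intro Hn. apply (proj2 (proj2 (nextS_spec A M T))); eauto. }
  pose proof HGT as [HTM [[x0 Hx0] [_ HTf]]].
  assert (Huniq : forall y, T y -> y = x0).
  { intros y Hy. apply NNPP; intro Hne.
    destruct (split_good A HA M HMk T y x0 HGT Hy Hx0 Hne) as [S' [HG' [Hs' Hns]]].
    apply Hns. apply Hmin; auto. }
  exists x0. split. destruct Hx0 as [H0 _]; auto.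
  split. apply HTM; auto.
  intros mu1 mu2 t H1 H2 Ht Heq.
  assert (H : T (ba_lincomb t mu1 (1-t) mu2)) by (rewrite <- Heq; auto).
  destruct (HTf mu1 mu2 t H1 H2 Ht H) as [Ha Hb]. rewrite (Huniq _ Ha), (Huniq _ Hb). reflexivity.
Qed.

Lemma max_extreme {Omega} A (HA : is_algebra A) (M : setfun Omega -> Prop) (HMk : weakly_compact A M) f :
  is_simple A f -> (exists x, M x) ->
  exists mu, extreme_point M mu /\ forall m, M m -> integral m f <= integral mu f.
Proof.
  intros Hf Hne.
  assert (HGM : good A M M).
  { split. intros x Hx; auto. split; auto. split.
    - exists (fun _ => False). split. intros mu []. intros x Hx. tauto.
    - intros mu1 mu2 t H1 H2 _ _. auto. }
  destruct (argmax_good A HA M HMk M f HGM Hf) as [S' [HG' [Hsub Hmax]]].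
  destruct (extreme_exists A HA M HMk S' HG') as [x0 [Hx0 Hext]].
  exists x0. split; [auto|intros m Hm; apply Hmax; auto].
Qed.

Theorem mainTheorem12 (Omega : Type) (A : (Omega -> Prop) -> Prop)
  (HA : is_algebra A)
  (M N : setfun Omega -> Prop)
  (HMc : convex M) (HMk : weakly_compact A M)
  (HNc : convex N) (HNk : weakly_compact A N) :
  ((forall mu, ~ (M mu /\ N mu)) <->
     exists f : simple_rep Omega, is_simple A f /\
       exists c1 c2 : R, c2 < c1 /\
         (forall nu, N nu -> c1 <= integral nu f) /\
         (forall mu, M mu -> integral mu f <= c2))
  /\
  (exists (K : simple_rep Omega -> Prop) (M0 : setfun Omega -> Prop),
     (forall k, K k -> is_simple A k) /\
     (forall mu, M0 mu -> extreme_point M mu) /\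
     (forall k, K k -> (exists mu, M0 mu) ->
        exists mu, M0 mu /\ forall mu', M0 mu' -> integral mu' k <= integral mu k) /\
     (forall m, M m <->
        (is_ba A m /\
         forall k, K k -> exists mu, M0 mu /\ integral m k <= integral mu k))).
Proof.
  split.
  - split.
    + intros Hdis. apply separation; auto.
    + intros [f [Hf [c1 [c2 [Hlt [HN HM]]]]]] mu [Hm Hn].
      specialize (HN mu Hn); specialize (HM mu Hm). lra.
  - exists (fun k => is_simple A k), (fun mu => extreme_point M mu).
    split; [auto|split; [auto|split]].
    + intros k Hk [mu Hmu].
      destruct (max_extreme A HA M HMk k Hk (ex_intro _ mu (proj1 Hmu))) as [mu0 [He Hmax]].
      exists mu0. split; auto. intros mu' [HM' _]. apply Hmax; auto.
    + intros m. split.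
      * intros Hm. split. apply (proj1 HMk); auto. intros k Hk.
        destruct (max_extreme A HA M HMk k Hk (ex_intro _ m Hm)) as [mu0 [He Hmax]].
        exists mu0; split; auto.
      * intros [Hb Hall]. apply NNPP; intro Hn.
        assert (Hconv1 : convex (fun x : setfun Omega => x = m)).
        { intros mu nu t -> -> _. apply functional_extensionality; intro E; unfold ba_lincomb; ring. }
        assert (Hwc1 : weakly_compact A (fun x : setfun Omega => x = m)).
        { split. intros mu ->; auto. intros I U HU Hcov. destruct (Hcov m eq_refl) as [i Hi].
          exists (i::nil). intros mu ->. exists i; simpl; auto. }
        assert (Hdis1 : forall mu, ~ (M mu /\ mu = m)) by (intros mu [HM1 ->]; contradiction).
        destruct (separation A HA M (fun x => x = m) HMc HMk Hconv1 Hwc1 Hdis1)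
          as [f [Hf [c1 [c2 [Hlt [HN HMM]]]]]].
        destruct (Hall f Hf) as [mu [[HMmu _] Hle]].
        specialize (HN m eq_refl). specialize (HMM mu HMmu). lra.
Qed.
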